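(* Let $K$ be a finite simplicial complex with a hereditary ordering $\succ$, and let $r$ be a positive integer. Suppose that for any two simplices $\sigma,\tau\in K$ with $\dim\sigma=\dim\tau\ge r$ and $\mu(\sigma)=\mu(\tau)$ we have $\sigma\cup\tau\in K$. Then $K$ collapses on a subcomplex of dimension less than $r$.
   Context: $K$ is a finite simplicial complex (family of subsets of a finite vertex set containing $\emptyset$, closed under subsets); $\dim\sigma=|\sigma|-1$. For a strict total ordering $\succ$ of $K$ and non-empty $\sigma$, $\mu(\sigma)$ is the $\succ$-largest facet (codimension-one face) of $\sigma$; $\succ$ is hereditary if $\sigma\succ\tau$ whenever $\dim\sigma>\dim\tau$, and $\sigma\succ\tau$ whenever $\mu(\sigma)\succ\mu(\tau)$. A pair of non-empty simplices $(\sigma,\tau)$ is a free pair of $K$ if $\tau$ is a facet of $\sigma$ and $K\setminus\{\sigma,\tau\}$ is a simplicial complex; removing it is an elementary collapse. $K$ collapses on a subcomplex $L$ if $L$ is obtained from $K$ by a finite sequence of elementary collapses. *)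

(* Defs.v *)
From mathcomp Require Import all_boot.
From Stdlib Require Import Relations.
Set Implicit Arguments. Unset Strict Implicit. Unset Printing Implicit Defensive.

(* A finite simplicial complex on a finite vertex type V is a family
   K : {set {set V}} containing the empty set and closed under subsets.
   dim s = #|s| - 1, so dimensions are compared via cardinalities. *)
Definition simplicial_complex (V : finType) (K : {set {set V}}) : Prop :=
  set0 \in K /\ (forall s t : {set V}, s \in K -> t \subset s -> t \in K).

Definition facet (V : finType) (t s : {set V}) : bool :=
  (t \subset s) && (#|t|.+1 == #|s|).

Definition strict_total_order_on (V : finType) (K : {set {set V}})
    (succ : rel {set V}) : Prop :=
  (forall x, x \in K -> ~~ succ x x) /\
  (forall x y z, x \in K -> y \in K -> z \in K -> succ x y -> succ y z -> succ x z) /\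
  (forall x y, x \in K -> y \in K -> x != y -> succ x y || succ y x).

Definition mu (V : finType) (succ : rel {set V}) (s : {set V}) : {set V} :=
  odflt set0 [pick t : {set V} | facet t s &&
     [forall t' : {set V}, (facet t' s && (t' != t)) ==> succ t t']].

Definition hereditary (V : finType) (K : {set {set V}}) (succ : rel {set V}) : Prop :=
  strict_total_order_on K succ /\
  (forall s t, s \in K -> t \in K -> #|s| > #|t| -> succ s t) /\
  (forall s t, s \in K -> t \in K -> s != set0 -> t != set0 ->
     succ (mu succ s) (mu succ t) -> succ s t).

Definition free_pair (V : finType) (K : {set {set V}}) (s t : {set V}) : Prop :=
  s \in K /\ t \in K /\ s != set0 /\ t != set0 /\ facet t s /\
      simplicial_complex (K :\ s :\ t).

Definition elementary_collapse (V : finType) (K L : {set {set V}}) : Prop :=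
  exists s t, free_pair K s t /\ L = K :\ s :\ t.

Definition collapses (V : finType) (K L : {set {set V}}) : Prop :=
  clos_refl_trans _ (@elementary_collapse V) K L.

(* Main.v *)
Require Import Defs.
From mathcomp Require Import all_boot.
From Stdlib Require Import Relations.
Set Implicit Arguments. Unset Strict Implicit. Unset Printing Implicit Defensive.

Lemma facet_dec (V : finType) (t s : {set V}) :
  facet t s -> exists2 z, z \in s & t = s :\ z.
Proof.
case/andP=> ts /eqP hc.
have h1 : #|s :\: t| == 1.
  by rewrite cardsD (setIidPr ts) -hc subSnn.
case/cards1P: h1 => z hz.
have zs : z \in s by have := set11 z; rewrite -hz inE => /andP[].
exists z => //.
by rewrite -hz setDDr setDv set0U (setIidPr ts).
Qed.

Lemma asym (V : finType) (K : {set {set V}}) succ x y :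
  strict_total_order_on K succ -> x \in K -> y \in K -> succ x y -> succ y x -> False.
Proof.
case=> irr [tr _] xK yK h1 h2.
by have := irr x xK; rewrite (tr _ _ _ xK yK xK h1 h2).
Qed.

Lemma exists_max (V : finType) (K : {set {set V}}) succ (F : {set {set V}}) :
  strict_total_order_on K succ -> F \subset K -> F != set0 ->
  exists2 f, f \in F & forall g, g \in F -> g != f -> succ f g.
Proof.
move=> hs FK /set0Pn [f0 f0F].
pose c f := #|[set g in F | succ g f]|.
case: (arg_minnP c f0F) => f fF fmin.
exists f => // g gF gf.
have [irr [tr tot]] := hs.
have fK := subsetP FK f fF; have gK := subsetP FK g gF.
have : f != g by rewrite eq_sym.
move/(tot f g fK gK)/orP => [//|hgf].
have := fmin g gF; rewrite /c.
suff /proper_card : [set h in F | succ h g] \proper [set h in F | succ h f].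
  by rewrite ltnNge => /negP.
apply/properP; split.
  apply/subsetP => h; rewrite !inE => /andP[hF hg]; rewrite hF /=.
  exact: (tr _ _ _ (subsetP FK h hF) gK fK hg hgf).
by exists g; rewrite !inE ?gF ?hgf // (negbTE (irr g gK)).
Qed.

Lemma facetD1 (V : finType) (s : {set V}) x : x \in s -> facet (s :\ x) s.
Proof. by move=> xs; rewrite /facet subD1set (cardsD1 x s) xs /= add1n. Qed.

Lemma facetK (V : finType) (K : {set {set V}}) t s :
  simplicial_complex K -> s \in K -> facet t s -> t \in K.
Proof. by move=> [_ hc] sK /andP[ts _]; exact: hc sK ts. Qed.

Lemma mu_spec (V : finType) (K : {set {set V}}) succ s :
  simplicial_complex K -> strict_total_order_on K succ -> s \in K -> s != set0 ->
  facet (mu succ s) s /\ forall f, facet f s -> f != mu succ s -> succ (mu succ s) f.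
Proof.
move=> hK hs sK sn.
have FK : [set f | facet f s] \subset K.
  by apply/subsetP => f; rewrite inE => /(facetK hK sK).
have Fn : [set f | facet f s] != set0.
  case/set0Pn: sn => x xs; apply/set0Pn; exists (s :\ x); rewrite inE.
  exact: facetD1.
case: (exists_max hs FK Fn) => f; rewrite inE => ff fmax.
rewrite /mu; case: pickP => [t /andP[ft /forallP H]|H].
  split=> // g fg gt; have := H g; rewrite fg gt /=; exact.
have := H f; rewrite ff /=; move/negbT/negP; case.
apply/forallP => g; apply/implyP => /andP[gf ng].
by apply: fmax => //; rewrite inE.
Qed.

Lemma mu_ge (V : finType) (K : {set {set V}}) succ s t :
  simplicial_complex K -> hereditary K succ -> s \in K -> t \in K ->
  s != set0 -> t != set0 -> succ s t ->
  mu succ s = mu succ t \/ succ (mu succ s) (mu succ t).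
Proof.
move=> hK [hs [hsz hmu]] sK tK sn tn st.
have [fs _] := mu_spec hK hs sK sn.
have [ft _] := mu_spec hK hs tK tn.
have msK := facetK hK sK fs; have mtK := facetK hK tK ft.
case: (eqVneq (mu succ s) (mu succ t)) => [->|ne]; [by left|right].
have [_ [_ tot]] := hs.
case/orP: (tot _ _ msK mtK ne) => // h.
by case: (asym hs sK tK st (hmu _ _ tK sK tn sn h)).
Qed.

Lemma Gmax (V : finType) (K : {set {set V}}) succ n :
  simplicial_complex K -> hereditary K succ ->
  forall rho A : {set V}, #|rho| = n -> rho :|: A \in K ->
  (forall a, a \in A -> a \notin rho) ->
  (forall z a, z \in rho -> a \in A -> succ rho (a |: (rho :\ z))) ->
  forall X : {set V}, X \subset rho :|: A -> #|X| = #|rho| -> X != rho -> succ rho X.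
Proof.
move=> hK hH; have [hs [hsz hmu]] := hH; have [irr [tr tot]] := hs.
elim: n => [|n IH] rho A hn hU hdis hnb X XU hX Xn.
  move/eqP: hn; rewrite cards_eq0 => /eqP r0.
  move: hX; rewrite r0 cards0 => /eqP; rewrite cards_eq0 => /eqP XE.
  by move: Xn; rewrite XE r0 eqxx.
have inK : forall Y : {set V}, Y \subset rho :|: A -> Y \in K by move=> Y YU; exact: hK.2 _ _ hU YU.
have rn : rho != set0 by rewrite -card_gt0 hn.
have rK : rho \in K by apply: inK; exact: subsetUl.
have [fr mr] := mu_spec hK hs rK rn.
set r0 := mu succ rho in fr mr.
case: (facet_dec fr) => z0 z0r r0E.
have r0n : #|r0| = n by move: fr => /andP[_ /eqP]; rewrite hn => -[].
have r0U : r0 \subset rho :|: A by rewrite r0E; apply: subset_trans (subD1set _ _) (subsetUl _ _).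
have U' : r0 :|: (z0 |: A) = rho :|: A.
  apply/setP => w; rewrite r0E !inE; case: (eqVneq w z0) => [->|] //=.
  by rewrite z0r.
have dis' : forall a, a \in z0 |: A -> a \notin r0.
  move=> a; rewrite r0E !inE => /orP[/eqP ->|aA]; first by rewrite eqxx.
  by rewrite (negbTE (hdis a aA)) andbF.
have nb' : forall z a, z \in r0 -> a \in z0 |: A -> succ r0 (a |: (r0 :\ z)).
  move=> z a zr; rewrite in_setU1 => /orP[/eqP ->|aA].
    have E : z0 |: (r0 :\ z) = rho :\ z.
      move: zr; rewrite r0E !inE => /andP[zz0 zr].
      apply/setP => w; rewrite !inE; case: (eqVneq w z0) => [->|] //=.
      by rewrite eq_sym zz0 z0r.
    rewrite E; apply: mr; first by apply: facetD1; move: zr; rewrite r0E !inE => /andP[].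
    apply/eqP => e; move: zr; rewrite -e !inE eqxx. by [].
  have zr' : z \in rho by move: zr; rewrite r0E !inE => /andP[].
  have zz0 : z != z0 by move: zr; rewrite r0E !inE => /andP[].
  set Y := a |: (rho :\ z).
  have YU : Y \subset rho :|: A.
    apply/subsetP => w; rewrite !inE => /orP[/eqP ->|/andP[_ ->]]; by rewrite ?aA ?orbT.
  have YK := inK _ YU.
  have Yn : Y != set0 by apply/set0Pn; exists a; rewrite !inE eqxx.
  have hY : succ rho Y by apply: hnb.
  have [fY mY] := mu_spec hK hs YK Yn.
  have W : facet (a |: (r0 :\ z)) Y.
    have -> : a |: (r0 :\ z) = Y :\ z0.
      apply/setP => w; rewrite r0E !inE.
      case: (eqVneq w a) => [->|] /=.
        rewrite andbT; apply/esym/eqP => e; move: (hdis a aA); by rewrite e z0r.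
      by rewrite andbCA.
    apply: facetD1; rewrite !inE z0r andbT; apply/orP; right; by rewrite eq_sym.
  have WU : a |: (r0 :\ z) \subset rho :|: A.
    apply/subsetP => w; rewrite r0E !inE => /orP[/eqP ->|/andP[_ /andP[_ ->]]]; by rewrite ?aA ?orbT.
  have Wn : a |: (r0 :\ z) != r0.
    apply/eqP => e; move: (dis' a); rewrite inE aA orbT -e !inE eqxx => /(_ isT).
    by [].
  have mYK : mu succ Y \in K by apply: facetK hK YK fY.
  case: (mu_ge hK hH rK YK rn Yn hY) => h1; case: (eqVneq (a |: (r0 :\ z)) (mu succ Y)) => h2.
  - by move: Wn; rewrite h2 -h1 eqxx.
  - by move: (mY _ W h2); rewrite -h1.
  - by rewrite h2.
  - exact: (tr _ _ _ (inK _ r0U) mYK (inK _ WU) h1 (mY _ W h2)).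
have hU' : r0 :|: (z0 |: A) \in K by rewrite U'.
have IH' := IH r0 (z0 |: A) r0n hU' dis' nb'.
have XK := inK _ XU.
have Xn0 : X != set0 by rewrite -card_gt0 hX hn.
case: (boolP (succ rho X)) => // hXr.
have hXr' : succ X rho.
  by case/orP: (tot _ _ XK rK Xn) => //; rewrite (negbTE hXr).
have [fX mX] := mu_spec hK hs XK Xn0.
have mXU : mu succ X \subset rho :|: A by apply: subset_trans XU; case/andP: fX.
have mXK := inK _ mXU.
have mXc : #|mu succ X| = #|r0|.
  by move: fX => /andP[_ /eqP]; rewrite hX hn r0n => -[].
have mXe : mu succ X = r0.
  case: (mu_ge hK hH XK rK Xn0 rn hXr') => // h.
  case: (eqVneq (mu succ X) r0) => // ne.
  have mXU' : mu succ X \subset r0 :|: (z0 |: A) by rewrite U'.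
  have := IH' _ mXU' mXc ne.
  by move=> h'; case: (asym hs mXK (inK _ r0U) h h').
case: (facet_dec fX) => w wX mXw.
have wr0 : w \notin r0 by rewrite -mXe mXw !inE eqxx.
have XE : X = w |: r0.
  by rewrite -mXe mXw setD1K.
have wU : w \in rho :|: A by apply: (subsetP XU).
move: wU; rewrite inE => /orP[wr|wA].
  case: (eqVneq w z0) => [e|ne].
    by move: Xn; rewrite XE r0E e setD1K // eqxx.
  by move: wr0; rewrite r0E !inE ne wr.
have := hnb z0 w z0r wA; rewrite -r0E -XE => h.
by case: (asym hs rK XK h hXr').
Qed.

Lemma facet_card (V : finType) (t s : {set V}) : facet t s -> #|s| = #|t|.+1.
Proof. by case/andP=> _ /eqP. Qed.

Lemma facet_sub (V : finType) (t s : {set V}) : facet t s -> t \subset s.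
Proof. by case/andP. Qed.

Lemma facet_is (V : finType) (rho s : {set V}) a :
  facet rho s -> a \in s -> a \notin rho -> rho = s :\ a.
Proof.
move=> f aS anr; case: (facet_dec f) => c cs E.
case: (eqVneq c a) => [e|ne]; first by rewrite E e.
by move: anr; rewrite E !inE eq_sym ne aS.
Qed.

Lemma core (V : finType) (K : {set {set V}}) succ (w s t : {set V}) :
  simplicial_complex K -> hereditary K succ -> w \in K ->
  facet s w -> facet t w -> s != t -> mu succ s = mu succ t ->
  mu succ w = s \/ mu succ w = t.
Proof.
move=> hK hH wK fs ft st hm; have [hs [hsz hmu]] := hH.
case: (facet_dec fs) => b bw sE; case: (facet_dec ft) => a aw tE.
have ab : a != b by apply: contraNneq st => e; rewrite sE tE e.
have sK := facetK hK wK fs; have tK := facetK hK wK ft.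
have as_ : a \in s by rewrite sE !inE ab.
have bt : b \in t by rewrite tE !inE eq_sym ab.
have sn : s != set0 by apply/set0Pn; exists a.
have tn : t != set0 by apply/set0Pn; exists b.
have [frs mrs] := mu_spec hK hs sK sn.
have [frt mrt] := mu_spec hK hs tK tn.
set rho := mu succ s in frs mrs hm.
rewrite -hm in frt mrt.
have anr : a \notin rho by apply/negP => /(subsetP (facet_sub frt)); rewrite tE !inE eqxx.
have bnr : b \notin rho by apply/negP => /(subsetP (facet_sub frs)); rewrite sE !inE eqxx.
have rs : rho = s :\ a := facet_is frs as_ anr.
have rt : rho = t :\ b := facet_is frt bt bnr.
have wE : rho :|: [set a; b] = w.
  apply/setP => x; rewrite rs sE !inE.
  case: (eqVneq x a) => [->|xa]; first by rewrite aw orbT.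
  case: (eqVneq x b) => [->|xb]; first by rewrite bw !orbT.
  by rewrite !orbF.
have hU : rho :|: [set a; b] \in K by rewrite wE.
have hdis : forall c, c \in [set a; b] -> c \notin rho.
  by move=> c; rewrite !inE => /orP[] /eqP ->.
have nbr : forall (u : {set V}) c z, rho = u :\ c -> c \in u -> mu succ u = rho ->
    z \in rho -> c |: (rho :\ z) = u :\ z.
  move=> u c z -> cu _ zr; apply/setP => x; rewrite !inE.
  case: (eqVneq x c) => [->|xc] //=.
  move: zr; rewrite !inE => /andP[zc _]; by rewrite eq_sym zc cu.
have hnb : forall z c, z \in rho -> c \in [set a; b] -> succ rho (c |: (rho :\ z)).
  move=> z c zr; rewrite !inE => /orP[] /eqP ->.
    rewrite (nbr s a z rs as_ erefl zr); apply: mrs.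
      by apply: facetD1; move: zr; rewrite rs !inE => /andP[].
    apply/eqP => e; move: anr; rewrite -e !inE as_ andbT.
    by move: zr; rewrite rs !inE => /andP[za _]; rewrite eq_sym za.
  rewrite (nbr t b z rt bt (esym hm) zr); apply: mrt.
    by apply: facetD1; move: zr; rewrite rt !inE => /andP[].
  apply/eqP => e; move: bnr; rewrite -e !inE bt andbT.
  by move: zr; rewrite rt !inE => /andP[za _]; rewrite eq_sym za.
have G := Gmax hK hH (erefl #|rho|) hU hdis hnb.
have wn : w != set0 by apply/set0Pn; exists a.
have [fw mw] := mu_spec hK hs wK wn.
case: (eqVneq (mu succ w) s) => [|ns]; [by left|].
case: (eqVneq (mu succ w) t) => [|nt]; [by right|].
exfalso.
set f := mu succ w in fw mw ns nt.
have fK := facetK hK wK fw.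
have fn : f != set0 by rewrite -card_gt0; move: (facet_card fw) (facet_card fs) (facet_card frs) => -> [->] [->].
have hfs : succ f s by apply: mw; rewrite // eq_sym.
have [ffm _] := mu_spec hK hs fK fn.
have mfK := facetK hK fK ffm.
have mfU : mu succ f \subset rho :|: [set a; b].
  by rewrite wE; apply: subset_trans (facet_sub ffm) (facet_sub fw).
have mfc : #|mu succ f| = #|rho|.
  by move: (facet_card fw) (facet_card fs) (facet_card frs) (facet_card ffm) => -> [->] [->] [].
case: (mu_ge hK hH fK sK fn sn hfs) => h.
  have rf : rho \subset f by move: (facet_sub ffm); rewrite h.
  case: (facet_dec fw) => x xw fE.
  have xnr : x \notin rho by apply/negP => /(subsetP rf); rewrite fE !inE eqxx.
  move: xw; rewrite -wE !inE (negbTE xnr) /= => /orP[] /eqP e.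
    by move: nt; rewrite fE tE e eqxx.
  by move: ns; rewrite fE sE e eqxx.
case: (eqVneq (mu succ f) rho) => [e|ne].
  by move: h; rewrite e => /(negP (hs.1 _ (facetK hK sK frs))).
by case: (asym hs mfK (facetK hK sK frs) h (G _ mfU mfc ne)).
Qed.

Lemma grandchild (V : finType) (K : {set {set V}}) succ (sg : {set V}) c :
  simplicial_complex K -> hereditary K succ -> sg \in K -> sg != set0 ->
  mu succ sg != set0 -> c \in sg -> mu succ sg = sg :\ c ->
  let y := c |: mu succ (mu succ sg) in
  [/\ y != set0, mu succ y = mu succ (mu succ sg), y \subset sg,
      #|y| = #|mu succ sg| & c \in y].
Proof.
move=> hK hH sK sn tn cs tE y; have [hs [hsz hmu]] := hH.
have [fs ms] := mu_spec hK hs sK sn.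
set t := mu succ sg in fs ms tn tE y *.
have tK := facetK hK sK fs.
have [ft mt] := mu_spec hK hs tK tn.
set x := mu succ t in ft mt y *.
have ct : c \notin t by rewrite tE !inE eqxx.
have cx : c \notin x by apply: contra ct; apply: (subsetP (facet_sub ft)).
have ys : y \subset sg.
  apply/subsetP => w; rewrite !inE => /orP[/eqP ->//|wx].
  by move: (subsetP (facet_sub ft) w wx); rewrite tE !inE => /andP[].
have yc : #|y| = #|t| by rewrite cardsU1 cx (facet_card ft) add1n.
have cy : c \in y by rewrite !inE eqxx.
have yn : y != set0 by apply/set0Pn; exists c.
split=> //.
have yK := hK.2 _ _ sK ys.
have [fy my] := mu_spec hK hs yK yn.
case: (eqVneq (mu succ y) x) => // ne; exfalso.
have fxy : facet x y.
  by rewrite /facet yc (facet_card ft) eqxx andbT; apply/subsetP => w wx; rewrite !inE wx orbT.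
have h1 : succ (mu succ y) x by apply: my => //; rewrite eq_sym.
case: (facet_dec fy) => w wy myE.
have wc : w != c by apply: contra_neq ne => e; rewrite myE e /y setU1K.
have ws : w \in sg := subsetP ys w wy.
set g := sg :\ w.
have fg : facet g sg by apply: facetD1.
have gt : g != t by apply/eqP => e; move: ct; rewrite -e !inE eq_sym wc cs.
have htg : succ t g by apply: ms.
have gK := facetK hK sK fg.
have gtc : #|g| = #|t| by apply: succn_inj; rewrite -(facet_card fg) (facet_card fs).
have gn : g != set0 by rewrite -card_gt0 gtc card_gt0.
have fmg : facet (mu succ y) g.
  apply/andP; split; first by rewrite myE /g; apply: setSD.
  apply/eqP; rewrite -(facet_card fy) yc; apply: succn_inj.
  by rewrite -(facet_card fg) (facet_card fs).
have [fgg mgg] := mu_spec hK hs gK gn.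
have myK := facetK hK yK fy.
have xK := facetK hK tK ft.
have mgK := facetK hK gK fgg.
have h2 : succ (mu succ g) x.
  case: (eqVneq (mu succ y) (mu succ g)) => [<- //|ne2].
  exact: (hs.2.1 _ _ _ mgK myK xK (mgg _ fmg ne2) h1).
have := hmu _ _ gK tK gn tn h2 => hgt.
by case: (asym hs tK gK htg hgt).
Qed.

Definition Jinv (V : finType) (K L : {set {set V}}) succ :=
  forall x w, x \in L -> w \in K -> w \notin L -> w != set0 -> mu succ w = x ->
  exists2 y, y \in L & (y != set0) && (mu succ y == x).

Lemma cardD1lt (V : finType) (L : {set {set V}}) s : s \in L -> #|L :\ s| < #|L|.
Proof. by move=> sL; rewrite (cardsD1 s L) sL. Qed.

Lemma main_ind (V : finType) (K : {set {set V}}) succ r :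
  simplicial_complex K -> hereditary K succ -> 0 < r ->
  (forall s t : {set V}, s \in K -> t \in K ->
     #|s| = #|t| -> r < #|s| -> mu succ s = mu succ t -> s :|: t \in K) ->
  forall n (L : {set {set V}}), #|L| <= n -> L \subset K -> simplicial_complex L ->
  Jinv K L succ ->
  exists L', collapses L L' /\ (forall s, s \in L' -> #|s| <= r).
Proof.
move=> hK hH r0 hyp; have [hs [hsz hmu]] := hH.
elim=> [|n IH] L Ln LK hL hJ.
  exists L; split; first exact: rt_refl.
  by move: Ln; rewrite leqn0 cards_eq0 => /eqP -> s; rewrite inE.
set B := [set s in L | r < #|s|].
case: (eqVneq B set0) => [B0|Bn].
  exists L; split; first exact: rt_refl.
  move=> s sL; rewrite leqNgt; apply/negP => hr.
  by have := in_set0 s; rewrite -B0 inE sL hr.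
have BK : B \subset K by apply: subset_trans LK; apply/subsetP => s; rewrite inE => /andP[].
case: (exists_max hs BK Bn) => sg; rewrite inE => /andP[sL rs] smax.
have sK := subsetP LK sg sL.
have maxsz : forall u, u \in L -> #|u| <= #|sg|.
  move=> u uL; rewrite leqNgt; apply/negP => h.
  have uB : u \in B by rewrite inE uL (ltn_trans rs h).
  have un : u != sg by apply: contraTneq h => ->; rewrite ltnn.
  have uK := subsetP LK u uL.
  by case: (asym hs sK uK (smax u uB un) (hsz _ _ uK sK h)).
have sn : sg != set0 by rewrite -card_gt0 (leq_ltn_trans _ rs).
have [fs ms] := mu_spec hK hs sK sn.
set t := mu succ sg in fs ms.
have tL : t \in L := hL.2 _ _ sL (facet_sub fs).
have tK := subsetP LK t tL.
have tn : t != set0.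
  by rewrite -card_gt0; apply: leq_trans r0 _; rewrite -ltnS -(facet_card fs).
case: (facet_dec fs) => c cs tE.
have ct : c \notin t by rewrite tE !inE eqxx.
have ts : t != sg by apply/eqP => e; move: ct; rewrite e cs.
set L' := L :\ sg :\ t.
have hL' : simplicial_complex L'.
  split.
    rewrite !inE hL.1 andbT; apply/andP; split; apply/eqP => e.
      by move: tn; rewrite -e eqxx.
    by move: sn; rewrite -e eqxx.
  move=> u v; rewrite !inE => /and3P[ut us uL] vu.
  have vL := hL.2 _ _ uL vu.
  rewrite vL andbT; apply/andP; split; apply/eqP => e; last first.
    rewrite e in vu; move: us; rewrite eq_sym eqEcard vu (maxsz u uL).
    by [].
  rewrite {}e in vu.
  have tu : t \proper u by rewrite properEneq eq_sym ut vu.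
  have uc : #|u| = #|sg|.
    apply/eqP; rewrite eqn_leq maxsz //= (facet_card fs); exact: proper_card.
  have ftu : facet t u by rewrite /facet vu uc (facet_card fs) eqxx.
  have uK := subsetP LK u uL.
  have un : u != set0 by rewrite -card_gt0 uc card_gt0.
  have uB : u \in B by rewrite inE uL uc rs.
  have [fu mu_] := mu_spec hK hs uK un.
  have mut : mu succ u = t.
    case: (eqVneq t (mu succ u)) => // ne.
    have := mu_ _ ftu ne; rewrite /t => h.
    by case: (asym hs sK uK (smax u uB us) (hmu _ _ uK sK un sn h)).
  have wK := hyp _ _ sK uK (esym uc) rs (esym mut).
  have cu : c \notin u.
    apply/negP => cu; move: us; apply/negP; rewrite negbK eq_sym eqEcard uc leqnn andbT.
    by rewrite -(setD1K cs) -tE; apply/subsetP => w; rewrite !inE => /orP[/eqP ->//|/(subsetP vu)].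
  have wE : sg :|: u = c |: u.
    rewrite -(setD1K cs) -tE -setUA (setUidPr vu).
    by [].
  have fsw : facet sg (sg :|: u).
    by rewrite /facet subsetUl wE cardsU1 cu add1n uc eqxx.
  have fuw : facet u (sg :|: u).
    by rewrite /facet subsetUr wE cardsU1 cu add1n eqxx.
  have wL : sg :|: u \notin L.
    apply/negP => /maxsz; rewrite wE cardsU1 cu add1n uc ltnn.
    by [].
  have wn : sg :|: u != set0 by apply/set0Pn; exists c; rewrite wE !inE eqxx.
  have su : sg != u by rewrite eq_sym.
  have xJ : forall x, x \in L -> mu succ (sg :|: u) = x -> False.
    move=> x xL hx.
    case: (hJ x _ xL wK wL wn hx) => y yL /andP[yn /eqP hy].
    have := maxsz y yL; rewrite (facet_card (proj1 (mu_spec hK hs (subsetP LK y yL) yn))) hy.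
    by rewrite -hx -(facet_card (proj1 (mu_spec hK hs wK wn))) wE cardsU1 cu add1n uc ltnn.
  case: (core hK hH wK fsw fuw su (esym mut)) => h; [exact: xJ sL h|exact: xJ uL h].
have fp : free_pair L sg t by do 5 (split=> //).
have EC : elementary_collapse L L' by exists sg, t.
have L'K : L' \subset K by apply: subset_trans LK; apply/subsetP => w; rewrite !inE => /and3P[].
have L'n : #|L'| <= n.
  rewrite -ltnS; apply: leq_trans Ln; apply: leq_ltn_trans (cardD1lt sL).
  by apply: subset_leq_card; exact: subD1set.
have [gn [gmu gs gc gcy]] := grandchild hK hH sK sn tn cs tE.
have gL' : c |: mu succ t \in L'.
  rewrite !inE (hL.2 _ _ sL gs) andbT; apply/andP; split.
    by apply/eqP => e; move: ct; rewrite -e !inE eqxx.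
  by apply/eqP => e; move: gc; rewrite e (facet_card fs) => /esym /n_Sn.
have gpart : exists2 y, y \in L' & (y != set0) && (mu succ y == mu succ t).
  by exists (c |: mu succ t) => //; rewrite gn gmu eqxx.
have hJ' : Jinv K L' succ.
  move=> x w xL' wK wL' wn hx.
  have xL : x \in L by move: xL'; rewrite !inE => /and3P[].
  have xt : x != t by move: xL'; rewrite !inE => /and3P[].
  case: (boolP (w \in L)) => wL.
    move: wL'; rewrite !inE wL andbT negb_and !negbK => /orP[/eqP e|/eqP e].
      by rewrite -hx e.
    by move: xt; rewrite -hx e eqxx.
  case: (hJ x w xL wK wL wn hx) => y yL /andP[yn /eqP hy].
  case: (boolP (y \in L')) => yL'; first by exists y => //; rewrite yn hy eqxx.
  move: yL'; rewrite !inE yL andbT negb_and !negbK => /orP[/eqP e|/eqP e].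
    by rewrite -hy e.
  by move: xt; rewrite -hy e eqxx.
case: (IH L' L'n L'K hL' hJ') => L2 [hc h2].
exists L2; split => //.
exact: rt_trans (rt_step _ _ _ _ EC) hc.
Qed.

Unset Implicit Arguments.
Theorem lemma7 (V : finType) (K : {set {set V}}) (succ : rel {set V}) (r : nat) :
  simplicial_complex K ->
  hereditary K succ ->
  0 < r ->
  (forall s t : {set V}, s \in K -> t \in K ->
     #|s| = #|t| -> r < #|s| -> mu succ s = mu succ t -> s :|: t \in K) ->
  exists L : {set {set V}}, collapses K L /\ (forall s, s \in L -> #|s| <= r).
Proof.
move=> hK hH r0 hyp.
apply: (main_ind hK hH r0 hyp (leqnn #|K|) (subxx K) hK).
by move=> x w _ wK wL; rewrite wK in wL.
Qed.
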